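(* Let $G=(V,E,w)$ be a weighted graph with graph distance $d_G$, let $\mathcal{U}\subseteq V$ be a patch with injective coordinate map $\phi\colon\mathcal{U}\to\mathbb{R}^q$, let $v_0\in\mathcal{U}$, $\gamma\ge 0$ and $C>0$, and let $f\colon V\to\mathbb{R}$ satisfy $f\in C^\gamma_G(C,v_0)$ (defined below). Let $\tau\subseteq\mathcal{U}$ be a cluster with $v_0\in\tau$, and let $\psi_{j,k}$ be a samplet associated with $\tau$, i.e. $\psi_{j,k}=\sum_{\ell=1}^{|\tau|}\omega_{j,k}^{(\ell)}\delta_{\phi(v_\ell)}$, where $\tau=\{v_1,\dots,v_{|\tau|}\}$, with real weights satisfying $\sum_{\ell=1}^{|\tau|}(\omega_{j,k}^{(\ell)})^2=1$ and having vanishing moments up to order $\lfloor\gamma\rfloor$, i.e. $\sum_{\ell=1}^{|\tau|}\omega_{j,k}^{(\ell)}\,\phi(v_\ell)^{\boldsymbol\alpha}=0$ for every multi-index $\boldsymbol\alpha\in\mathbb{N}_0^q$ with $|\boldsymbol\alpha|\le\lfloor\gamma\rfloor$. Then \[ |\langle \psi_{j,k},f\circ\phi^{-1}\rangle|\le C \max_{v\in\mathcal{U}} d_G(v,v_0)^\gamma \sqrt{|\tau|}, \] where $\langle \psi_{j,k},g\rangle:=\sum_{\ell=1}^{|\tau|}\omega_{j,k}^{(\ell)}g(\phi(v_\ell))$.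
   Context: $G=(V,E,w)$ is a weighted graph with finite vertex set $V$, edge set $E$ and nonnegative edge weights $w$; $d_G$ denotes the graph (shortest weighted path) distance. The vertex set is partitioned into patches, each patch $\mathcal{U}$ being equipped with a unique chart, i.e. an injective coordinate map $\phi\colon\mathcal{U}\to\mathbb{R}^q$. For $\mathbf{x}\in\mathbb{R}^q$ and a multi-index $\boldsymbol\beta$, $\mathbf{x}^{\boldsymbol\beta}=\prod_i x_i^{\beta_i}$. Definition of the class: for $v_0\in\mathcal{U}$ (with $(\mathcal{U},\phi)$ the chart containing $v_0$), $\gamma\ge0$, $C>0$, a function $f\colon V\to\mathbb{R}$ belongs to $C^\gamma_G(C,v_0)$ if there exist real coefficients $(c_{\boldsymbol\beta})_{|\boldsymbol\beta|\le\lfloor\gamma\rfloor}$ with $\sum_{|\boldsymbol\beta|=\lfloor\gamma\rfloor}|c_{\boldsymbol\beta}|\neq 0$ such that \[ \Big|f(v)-\sum_{|\boldsymbol\beta|\le\lfloor\gamma\rfloor}c_{\boldsymbol\beta}\big(\phi(v)-\phi(v_0)\big)^{\boldsymbol\beta}\Big|\le C\, d_G(v,v_0)^\gamma\quad\text{for every } v\in\mathcal{U}. \] A cluster is a subset of the patch $\mathcal{U}$ (a node of a hierarchical cluster tree on $\phi(\mathcal{U})$); $\delta_{\mathbf{z}}$ denotes the Dirac measure at $\mathbf{z}\in\mathbb{R}^q$. *)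

(* Defs.v *)
From HB Require Import structures.
From mathcomp Require Import all_boot all_order all_algebra.
From mathcomp Require Import all_classical all_reals all_analysis.
Set Implicit Arguments. Unset Strict Implicit. Unset Printing Implicit Defensive.
Import Order.TTheory GRing.Theory Num.Theory.
Local Open Scope ring_scope.

(* Weighted graph G = (V, E, w): finite vertex set V, edge relation E,
   weights w (nonnegativity is a hypothesis of the theorem). *)

Definition walk_length (R : realType) (V : finType) (w : V -> V -> R)
  (u : V) (p : seq V) : R := \sum_(x <- pairmap w u p) x.

(* graph (shortest weighted path) distance, +oo if no path exists *)
Definition graph_dist (R : realType) (V : finType) (E : rel V) (w : V -> V -> R)
  (u v : V) : \bar R :=
  ereal_inf [set (walk_length w u p)%:E | p in [set p : seq V | path E u p /\ last u p = v]].

(* multi-indices beta in N_0^q with entries <= m (those with |beta| <= m are all of this form) *)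
Definition mindex (q m : nat) := {ffun 'I_q -> 'I_m.+1}.
Definition mabs (q m : nat) (b : mindex q m) : nat := \sum_(i < q) (b i : nat).

Definition mono (R : realType) (q m : nat) (x : 'rV[R]_q) (b : mindex q m) : R :=
  \prod_(i < q) x ord0 i ^+ (b i).

Definition Cgamma (R : realType) (V : finType) (E : rel V) (w : V -> V -> R)
  (q : nat) (U : {set V}) (phi : V -> 'rV[R]_q) (gamma C : R) (v0 : V)
  (f : V -> R) : Prop :=
  let m := Num.truncn gamma in
  exists c : mindex q m -> R,
    (\sum_(b : mindex q m | (mabs b == m)%N) `|c b| != 0) /\
    forall v, v \in U ->
      ((`|f v - \sum_(b : mindex q m | (mabs b <= m)%N) c b * mono (phi v - phi v0) b|)%:E
        <= C%:E * poweR (graph_dist E w v v0) gamma)%E.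

(* Main.v *)
Require Import Defs.
From HB Require Import structures.
From mathcomp Require Import all_boot all_order all_algebra.
From mathcomp Require Import all_classical all_reals all_analysis.
From mathcomp Require Import ring lra zify.
Import Order.TTheory GRing.Theory Num.Theory.
Local Open Scope ring_scope.

Lemma cs_bound (R : realType) (V : finType) (tau : {set V}) (omega : V -> R)
  (hn : (0 < #|tau|)%N) (hnorm : \sum_(v in tau) omega v ^+ 2 = 1) :
  \sum_(v in tau) `|omega v| <= Num.sqrt (#|tau|%:R).
Proof.
set s := Num.sqrt _.
have sp : 0 < s by rewrite sqrtr_gt0 ltr0n.
have s2 : s ^+ 2 = #|tau|%:R by rewrite sqr_sqrtr // ler0n.
have h1 : forall v, s * (2 * `|omega v|) <= s ^+ 2 * omega v ^+ 2 + 1.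
  move=> v; rewrite -(real_normK (num_real (omega v))).
  have := sqr_ge0 (s * `|omega v| - 1); move=> H. nra.
have h2 : s * (2 * \sum_(v in tau) `|omega v|) <= s * (2 * s).
  rewrite mulr_sumr mulr_sumr.
  apply: le_trans (ler_sum _ (fun v _ => h1 v)) _.
  rewrite big_split /= -mulr_sumr hnorm sumr_const s2.
  rewrite mulr1 -mulr_natr. nra.
rewrite ler_pM2l // in h2. lra.
Qed.

Lemma key (R : realType) (V : finType) (tau : {set V}) (omega : V -> R)
  (q m : nat) (phi : V -> 'rV[R]_q) (y : 'I_q -> R)
  (hmom : forall alpha : mindex q m, (mabs alpha <= m)%N ->
     \sum_(v in tau) omega v * mono (phi v) alpha = 0) :
  forall n (a b : 'I_q -> nat), (\sum_i b i <= n)%N ->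
  (\sum_i a i + \sum_i b i <= m)%N ->
  \sum_(v in tau) omega v *
     \prod_i (phi v ord0 i ^+ a i * (phi v ord0 i - y i) ^+ b i) = 0.
Proof.
elim=> [|n IH] a b hb hab.
- have b0 : forall i, b i = 0%N.
    move=> i; move: hb; rewrite leqn0 sum_nat_eq0 => /forallP/(_ i).
    by move/eqP.
  have ha : forall i, (a i <= m)%N.
    move=> i; apply: leq_trans hab; apply: leq_trans (leq_addr _ _).
    by rewrite (bigD1 i) //= leq_addr.
  pose alpha : mindex q m := [ffun i => inord (a i)].
  have aE : forall i, (alpha i : nat) = a i.
    by move=> i; rewrite ffunE inordK // ltnS.
  rewrite -[RHS](hmom alpha).
    apply: eq_bigr => v _; congr (_ * _); rewrite /mono.
    by apply: eq_bigr => i _; rewrite b0 expr0 mulr1 aE.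
  rewrite /mabs; under eq_bigr do rewrite aE.
  by apply: leq_trans hab; rewrite leq_addr.
- case: (leqP (\sum_i b i) n) => hbn; first exact: IH.
  case: (pickP (fun i => 0 < b i)%N) => [i bi|H]; last first.
    exfalso; move: hbn; rewrite big1 // => j _.
    by move: (H j) => /= /negbT; rewrite lt0n negbK => /eqP.
  move: bi => /= bi.
  pose a' := fun j => (a j + (j == i))%N.
  pose b' := fun j => (b j - (j == i))%N.
  have sa : (\sum_j a' j = (\sum_j a j).+1)%N.
    rewrite (bigD1 i) //= (bigD1 i (P := predT)) //=.
    rewrite (eq_bigr a (P := fun j => j != i) (F1 := a')); last first.
      by move=> j /negbTE hj; rewrite /a' hj addn0.
    rewrite /a' eqxx /=; lia.
  have sb : ((\sum_j b' j).+1 = \sum_j b j)%N.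
    rewrite (bigD1 i) //= (bigD1 i (P := predT)) //=.
    rewrite (eq_bigr b (P := fun j => j != i) (F1 := b')); last first.
      by move=> j /negbTE hj; rewrite /b' hj subn0.
    rewrite /b' eqxx /=. lia.
  have E : forall v, \prod_j (phi v ord0 j ^+ a j * (phi v ord0 j - y j) ^+ b j)
     = \prod_j (phi v ord0 j ^+ a' j * (phi v ord0 j - y j) ^+ b' j)
       - y i * \prod_j (phi v ord0 j ^+ a j * (phi v ord0 j - y j) ^+ b' j).
    move=> v; rewrite (bigD1 i) //= (bigD1 i (P := predT)) //=.
    rewrite (bigD1 i (P := predT)) //=.
    rewrite (eq_bigr (fun j => phi v ord0 j ^+ a j * (phi v ord0 j - y j) ^+ b j)
       (P := fun j => j != i) (F1 := fun j => phi v ord0 j ^+ a' j * (phi v ord0 j - y j) ^+ b' j)); last first.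
      by move=> j /negbTE hj; rewrite /a' /b' hj addn0 subn0.
    rewrite (eq_bigr (fun j => phi v ord0 j ^+ a j * (phi v ord0 j - y j) ^+ b j)
       (P := fun j => j != i) (F1 := fun j => phi v ord0 j ^+ a j * (phi v ord0 j - y j) ^+ b' j)); last first.
      by move=> j /negbTE hj; rewrite /b' hj subn0.
    rewrite /a' /b' eqxx addn1 subn1.
    case: (b i) bi => // k _ /=.
    rewrite exprS exprS.
    set X := phi v ord0 i; set Y := y i; set A := X ^+ a i; set Bk := (X - Y) ^+ k.
    set P := \prod_(j | j != i) _. ring.
  under eq_bigr do rewrite E mulrBr mulrCA.
  rewrite sumrB -mulr_sumr (IH a' b') ?(IH a b') ?subrr ?mulr0 //.
  - by rewrite subrr.
  all: lia.
Qed.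

Theorem proposition4p1 (R : realType) (V : finType) (E : rel V) (w : V -> V -> R)
  (hw : forall u v, 0 <= w u v)
  (q : nat) (U : {set V}) (phi : V -> 'rV[R]_q) (phi_inj : {in U &, injective phi})
  (v0 : V) (gamma C : R) (hgamma : 0 <= gamma) (hC : 0 < C)
  (f : V -> R) (hf : Cgamma E w U phi gamma C v0 f)
  (tau : {set V}) (htauU : tau \subset U) (hv0 : v0 \in tau)
  (omega : V -> R)
  (hnorm : \sum_(v in tau) omega v ^+ 2 = 1)
  (hmom : forall alpha : mindex q (Num.truncn gamma),
     (mabs alpha <= Num.truncn gamma)%N ->
     \sum_(v in tau) omega v * mono (phi v) alpha = 0)
  (g : 'rV[R]_q -> R) (hg : forall v, v \in U -> g (phi v) = f v) :
  ((`|\sum_(v in tau) omega v * g (phi v)|)%:E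
    <= C%:E * (\big[maxe/-oo]_(v in U) poweR (graph_dist E w v v0) gamma)
       * (Num.sqrt (#|tau|%:R))%:E)%E.
Proof.
case: hf => c [_ hc].
set m := Num.truncn gamma in c hc hmom.
set P := fun v => \sum_(b : mindex q m | (mabs b <= m)%N) c b * mono (phi v - phi v0) b.
have hP : \sum_(v in tau) omega v * P v = 0.
  rewrite /P; under eq_bigr do rewrite mulr_sumr.
  rewrite exchange_big /=; apply: big1 => b hb.
  under eq_bigr do rewrite mulrCA.
  rewrite -mulr_sumr.
  have := @key R V tau omega q m phi (fun i => phi v0 ord0 i) hmom (mabs b)
     (fun _ => 0%N) (fun i => b i) (leqnn _).
  rewrite big1 // add0n => /(_ hb) H.
  rewrite -[RHS](mulr0 (c b)) -[X in _ = _ * X]H; congr (_ * _); apply: eq_bigr => v _.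
  congr (_ * _); rewrite /mono; apply: eq_bigr => i _.
  by rewrite !mxE expr0 mul1r.
have tU : forall v, v \in tau -> v \in U by move=> v; exact: (fintype.subsetP htauU v).
have hn : (0 < #|tau|)%N by apply/card_gt0P; exists v0.
have sp : 0 < Num.sqrt (#|tau|%:R : R) by rewrite sqrtr_gt0 ltr0n.
set M := (\big[maxe/-oo]_(v in U) _)%E.
have hM : forall v, v \in U -> (poweR (graph_dist E w v v0) gamma <= M)%E.
  by move=> v vU; apply: le_bigmax_cond.
have M0 : (0 <= M)%E by apply: le_trans (hM v0 (tU _ hv0)); apply: poweR_ge0.
case: M hM M0 => [mr| |] hM M0; last by [].
  2: by rewrite gt0_muley ?lte_fin // gt0_mulye ?lte_fin // leey.
rewrite -!EFinM lee_fin.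
have S1 : \sum_(v in tau) omega v * g (phi v) = \sum_(v in tau) omega v * (f v - P v).
  under [RHS]eq_bigr do rewrite mulrBr.
  rewrite sumrB hP subr0; apply: eq_bigr => v vt; by rewrite hg // tU.
have hb : forall v, v \in tau -> `|f v - P v| <= C * mr.
  move=> v vt; have := hc v (tU _ vt); rewrite -/(P v) => H.
  rewrite -lee_fin EFinM; apply: le_trans H _.
  by rewrite lee_pmul2l ?lte_fin //; apply: hM; rewrite tU.
rewrite S1; apply: le_trans (ler_norm_sum _ _ _) _.
have mr0 : 0 <= mr by rewrite -lee_fin.
apply: le_trans (_ : \sum_(v in tau) `|omega v| * (C * mr) <= _).
  apply: ler_sum => v vt; rewrite normrM; apply: ler_wpM2l => //; exact: hb.
rewrite -mulr_suml mulrC; apply: ler_wpM2l; first by rewrite mulr_ge0 // ltW.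
exact: cs_bound.
Qed.
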